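(* For any Dyck path $\lambda\in\mathbf D_N$, \[ \prod_{\substack{1<i\le N\\ r_i(\lambda)=r_{i-1}(\lambda)+1}}\bigl(1+z\,t^{-r_i(\lambda)}\bigr)=\prod_{\substack{1<i\le N\\ c_i(\lambda)=c_{i-1}(\lambda)+1}}\bigl(1+z\,t^{-c_i(\lambda)}\bigr). \]
   Context: A Dyck path $\lambda\in\mathbf D_N$ is a lattice path of south and east unit steps from $(0,N)$ to $(N,0)$ lying weakly below the segment joining these points; the staircase path $\delta$ alternates south and east steps. $r_i(\lambda)$ is the number of lattice squares in the $i$-th row (rows numbered north to south) lying above $\lambda$ and below $\delta$; $c_i(\lambda)$ is the number of such squares in the $i$-th column, columns numbered from right to left (equivalently $c_i(\lambda)=r_i(\lambda^* )$ for the transposed path). $z,t$ are indeterminates. *)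

(* Defs.v *)
From HB Require Import structures.
From mathcomp Require Import all_boot all_order all_algebra.
Set Implicit Arguments. Unset Strict Implicit. Unset Printing Implicit Defensive.
Import Order.TTheory GRing.Theory Num.Theory.

(* A lattice path from (0,N) to (N,0) is encoded by its sequence of unit
   steps: [true] = south step, [false] = east step. *)

(* Dyck path of size N: N south and N east steps, and the path stays weakly
   below the segment x + y = N, i.e. after every prefix the number of east
   steps does not exceed the number of south steps. *)
Definition is_dyck (N : nat) (s : seq bool) : Prop :=
  [/\ size s = (2 * N)%N, count id s = N &
      forall k, (count negb (take k s) <= count id (take k s))%N].

Fixpoint steps_before (b : bool) (k : nat) (s : seq bool) : nat :=
  match s with
  | [::] => 0
  | x :: s' =>
      if x == b then (if k is k'.+1 then steps_before b k' s' else 0)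
      else (steps_before b k s').+1
  end.

(* Row i (1 <= i <= N, numbered north to south) is the strip
   N-i <= y <= N-i+1.  The staircase delta has its south step of that row at
   x = i-1; lambda has it at x = (number of east steps before its i-th south
   step) <= i-1.  r_i = number of unit squares of row i between them. *)
Definition rowr (N : nat) (s : seq bool) (i : nat) : nat :=
  (i.-1 - steps_before true i.-1 s)%N.

(* Column i (1 <= i <= N, numbered right to left) is the strip
   N-i <= x <= N-i+1, containing the (N-i+1)-th east step (0-based index N-i).
   delta's east step there is at height i-1; lambda's is at height
   N - (number of south steps before it).  c_i = number of squares between,
   i.e. (#south before) + i - 1 - N = (#south before) - (N-i+1). *)
Definition colc (N : nat) (s : seq bool) (i : nat) : nat :=
  (steps_before false (N - i) s - (N - i).+1)%N.

(* Main.v *)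
Require Import Defs.
From HB Require Import structures.
From mathcomp Require Import all_boot all_order all_algebra.
From mathcomp Require Import zify.
Import GRing.Theory.

Fixpoint pairR (l : seq nat) : seq nat :=
  match l with
  | x :: ((y :: _) as l') => (if y == x.+1 then [:: y] else [::]) ++ pairR l'
  | _ => [::]
  end.

Lemma pairR_cons y l : pairR (y :: l) =
  (if l is x :: _ then (if x == y.+1 then [:: x] else [::]) else [::]) ++ pairR l.
Proof. by case: l. Qed.

Lemma pairR_rcons l y : pairR (rcons l y) =
  pairR l ++ (if (l != [::]) && (y == (last 0 l).+1) then [:: y] else [::]).
Proof.
elim: l => [|x l IH] //.
case: l IH => [|x' l''] IH; first by rewrite /= cats0.
rewrite rcons_cons [LHS]pairR_cons IH [in RHS]pairR_cons catA.
by [].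
Qed.

Lemma big_pairR (R : comUnitRingType) (f : nat -> R) g a n :
  (\prod_(a.+1 <= i < a + n | g i == (g i.-1).+1) f (g i))%R
  = (\prod_(y <- pairR (map g (iota a n))) f y)%R.
Proof.
elim: n a => [|n IH] a.
  by rewrite addn0 big_geq // big_nil.
case: n IH => [|n] IH.
  by rewrite addn1 big_geq // big_nil.
rewrite big_ltn_cond; last by lia.
have -> : a + n.+2 = a.+1 + n.+1 by lia.
rewrite IH /= big_cat /=.
by case: ifP => _; rewrite ?big_cons ?big_nil ?mul1r ?mulr1.
Qed.

Lemma sb_cat b k s1 s2 : steps_before b k (s1 ++ s2) =
  if k < count (pred1 b) s1 then steps_before b k s1
  else count (predC1 b) s1 + steps_before b (k - count (pred1 b) s1) s2.
Proof.
elim: s1 k => [|x s1 IH] k /=; first by rewrite subn0.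
have H : forall k, k.+1 - (count (pred1 b) s1).+1 = k - count (pred1 b) s1 by move=> ?; rewrite subSS.
case: x; case: b IH H => IH H /=; case: k => [|k] //=; rewrite ?IH ?ltnS ?H //;
  by case: ifP; rewrite ?addSn.
Qed.

Lemma cnt1T s : count (pred1 true) s = count id s.
Proof. by apply: eq_count => x; case: x. Qed.
Lemma cntC1T s : count (predC1 true) s = count negb s.
Proof. by apply: eq_count => x; case: x. Qed.
Lemma cnt1F s : count (pred1 false) s = count negb s.
Proof. by apply: eq_count => x; case: x. Qed.
Lemma cntC1F s : count (predC1 false) s = count id s.
Proof. by apply: eq_count => x; case: x. Qed.

Definition rowseqw (w : seq bool) : seq nat :=
  [seq k - steps_before true k w | k <- iota 0 (count id w)].
Definition colseqw (w : seq bool) : seq nat :=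
  [seq steps_before false j w - j.+1 | j <- iota 0 (count negb w)].

Lemma rowseqw_rcons w x : rowseqw (rcons w x) =
  if x then rcons (rowseqw w) (count id w - count negb w) else rowseqw w.
Proof.
rewrite /rowseqw -cats1 count_cat iotaD map_cat.
have E : [seq k - steps_before true k (w ++ [:: x]) | k <- iota 0 (count id w)]
       = [seq k - steps_before true k w | k <- iota 0 (count id w)].
  apply/eq_in_map => k; rewrite mem_iota add0n => /andP [_ hk].
  by rewrite sb_cat cnt1T hk.
rewrite E; clear E; case: x => /=; last by rewrite cats0.
by rewrite sb_cat cnt1T ltnn cntC1T subnn /= addn0 cats1.
Qed.

Lemma colseqw_rcons w x : colseqw (rcons w x) =
  if x then colseqw w else rcons (colseqw w) (count id w - (count negb w).+1).
Proof.
rewrite /colseqw -cats1 count_cat iotaD map_cat.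
have E : [seq steps_before false j (w ++ [:: x]) - j.+1 | j <- iota 0 (count negb w)]
       = [seq steps_before false j w - j.+1 | j <- iota 0 (count negb w)].
  apply/eq_in_map => k; rewrite mem_iota add0n => /andP [_ hk].
  by rewrite sb_cat cnt1F hk.
rewrite E; clear E; case: x => /=; first by rewrite cats0.
by rewrite sb_cat cnt1F ltnn cntC1F subnn /= addn0 cats1.
Qed.

Definition Pref (w : seq bool) := forall k, count negb (take k w) <= count id (take k w).

Lemma Pref_rcons {w x} : Pref (rcons w x) -> Pref w.
Proof.
move=> P k; case: (leqP k (size w)) => hk.
  by have := P k; rewrite -cats1 takel_cat.
by have := P (size w); rewrite -cats1 takel_cat // take_size take_oversize // ltnW.
Qed.

Lemma Pref_le {w} : Pref w -> count negb w <= count id w.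
Proof. by move=> P; have := P (size w); rewrite take_size. Qed.

Lemma last_cnt w : last false w -> 0 < count id w.
Proof. by elim/last_ind: w => [|w x _] //; rewrite last_rcons -cats1 count_cat; case: x => //= _; rewrite addn1. Qed.

Lemma last_cntF {w} : w != [::] -> ~~ last false w -> 0 < count negb w.
Proof. by elim/last_ind: w => [|w x _] //; rewrite last_rcons -cats1 count_cat; case: x => //= _ _; rewrite addn1. Qed.

Lemma size_rowseqw w : size (rowseqw w) = count id w.
Proof. by rewrite size_map size_iota. Qed.
Lemma size_colseqw w : size (colseqw w) = count negb w.
Proof. by rewrite size_map size_iota. Qed.

Lemma inv w : Pref w ->
 [/\ last false w -> 0 < count id w - count negb w,
     rowseqw w != [::] -> ((last 0 (rowseqw w)).+1 == count id w - count negb w) = last false w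
        /\ count id w - count negb w <= (last 0 (rowseqw w)).+1,
     colseqw w != [::] -> (last 0 (colseqw w) == count id w - count negb w) = ~~ last false w
        /\ last 0 (colseqw w) <= count id w - count negb w
   & forall v, count_mem v (pairR (rowseqw w)) + (last false w && (v == count id w - count negb w))
     = count_mem v (pairR (rev (colseqw w))) + ((0 < v) && (v <= count id w - count negb w))].
Proof.
elim/last_ind: w => [|w x IH] P.
  split => // v; rewrite /=; by case: v.
have he := Pref_le (Pref_rcons P).
have hx := Pref_le P; rewrite -cats1 !count_cat in hx.
case: (IH (Pref_rcons P)) => I1 I2 I3 I4.
rewrite rowseqw_rcons colseqw_rcons last_rcons -cats1 !count_cat.
clear P; case: x hx => /= hx.
  have -> : count id w + (1 + 0) - (count negb w + (0 + 0)) = (count id w - count negb w).+1 by lia.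
  have hcond : ((rowseqw w != [::]) && ((count id w - count negb w) == (last 0 (rowseqw w)).+1)) = last false w.
    case: (boolP (rowseqw w != [::])) => ne /=; first by rewrite eq_sym (I2 ne).1.
    move: ne; rewrite negbK -size_eq0 size_rowseqw => /eqP c0.
    apply/esym/negbTE; apply/negP => /last_cnt; by rewrite c0.
  rewrite last_rcons; split => //.
  - by move=> _; rewrite eqxx.
  - move=> ne; have [/eqP a b] := I3 ne; split; [apply/negbTE/eqP|]; lia.
  - move=> v; rewrite pairR_rcons count_cat hcond; have := I4 v.
    case: (last false w) => /=; lia.
have ne : w != [::] by apply/negP => /eqP ew; move: hx; rewrite ew.
have hc : count id w + (0 + 0) - (count negb w + (1 + 0)) = count id w - (count negb w).+1 by lia.
rewrite hc; split => //.
- move=> ne'; have [_ b] := I2 ne'; split; [apply/negbTE/eqP|]; lia.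
- by move=> _; rewrite last_rcons eqxx.
move=> v; rewrite rev_rcons pairR_cons count_cat.
have sz := size_colseqw w.
move: I3 I4 sz; case/lastP: (colseqw w) => [|s y] I3 I4 sz.
  have := I4 v; have := last_cntF ne; rewrite -sz /=.
  case: (last false w) => /= [_|/(_ isT)]; lia.
have ne2 : rcons s y != [::] by rewrite -size_eq0 size_rcons.
have := I4 v; have := I3 ne2; rewrite last_rcons rev_rcons.
set p := count_mem v (pairR (y :: rev s)); rewrite /=.
case: (last false w) => /= [[+ b]|[+ b]] => a; case: ifP => /eqP h /=; lia.
Qed.

Lemma revmap (h : nat -> nat) n :
  rev (map h (iota 0 n)) = map (fun i => h (n - i)) (iota 1 n).
Proof.
elim: n => [|n IH] //.
rewrite -addn1 iotaD map_cat rev_cat IH /= add0n addn1 /= subSS subn0.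
congr (_ :: _).
rewrite (iotaDl 1 1 n) -map_comp; apply/eq_map => i /=.
by rewrite add1n subSS.
Qed.

Local Open Scope ring_scope.

Theorem lemma2p2p4 (R : comUnitRingType) (z t : R) (N : nat) (lam : seq bool) :
  t \is a GRing.unit ->
  is_dyck N lam ->
  \prod_(2 <= i < N.+1 | rowr N lam i == (rowr N lam i.-1).+1)
      (1 + z * t ^- (rowr N lam i))
  = \prod_(2 <= i < N.+1 | colc N lam i == (colc N lam i.-1).+1)
      (1 + z * t ^- (colc N lam i)).
Proof.
move=> _ [hs hc hp].
have hP : Pref lam := hp.
have he : count negb lam = N.
  have := count_predC id lam; rewrite hs hc => h.
  have -> : count negb lam = count (predC id) lam by apply: eq_count.
  lia.
have [I1 _ _ I4] := inv _ hP.
rewrite hc he subnn in I1 I4.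
have rowE : map (rowr N lam) (iota 1 N) = rowseqw lam.
  rewrite /rowseqw hc (iotaDl 1 0 N) -map_comp; apply/eq_map => k /=.
  by rewrite /rowr add1n.
have colE : map (colc N lam) (iota 1 N) = rev (colseqw lam).
  by rewrite /colseqw he revmap.
have := big_pairR _ (fun y => 1 + z * t ^- y) (rowr N lam) 1 N.
rewrite add1n rowE => ->.
have := big_pairR _ (fun y => 1 + z * t ^- y) (colc N lam) 1 N.
rewrite add1n colE => ->.
apply: perm_big.
apply/allP => v _; apply/eqP.
have := I4 v; move: I1.
case: (last false lam) => [/(_ isT)//|_] /=.
lia.
Qed.
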